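(* Let $\sigma$ be a fixed permutation of $[k]$. The probability that a uniformly random involution of $[n]$ contains $\sigma$ as a subsequence is $1/k!+o(1)$ as $n\to\infty$.
   Context: $[n]=\{1,\dots,n\}$. An involution of $[n]$ is a permutation $\phi$ with $\phi^2$ the identity. A permutation $\phi$ of $[n]$ ($n\ge k$) contains the permutation $\sigma$ of $[k]$ as a subsequence if, in the word $\phi(1)\phi(2)\cdots\phi(n)$, the letters $1,\dots,k$ appear in the order $\sigma(1),\sigma(2),\dots,\sigma(k)$. *)

(* Defs.v *)
From HB Require Import structures.
From mathcomp Require Import all_boot all_order all_algebra all_fingroup.
From mathcomp Require Import all_classical all_reals all_analysis.
Set Implicit Arguments. Unset Strict Implicit. Unset Printing Implicit Defensive.
Import Order.TTheory GRing.Theory Num.Theory.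

(* Convention: [n] = {1..n} is represented by 'I_n = {0..n-1}
   (letter i+1 of the paper is i here). *)

Definition perm_word n (phi : 'S_n) : seq nat := [seq val (phi i) | i <- enum 'I_n].

(* phi contains sigma as a subsequence: the letters 1..k, read in order in the
   word of phi, are sigma(1),...,sigma(k). *)
Definition contains_pat k n (sigma : 'S_k) (phi : 'S_n) : bool :=
  [seq x <- perm_word phi | x < k] == perm_word sigma.

Definition is_involution n (phi : 'S_n) : bool := (phi * phi == 1)%g.

Definition inv_contain_prob (R : realType) k (sigma : 'S_k) (n : nat) : R :=
  (#|[set phi : 'S_n | is_involution phi && contains_pat sigma phi]|%:R /
   #|[set phi : 'S_n | is_involution phi]|%:R)%R.

(* Main.v *)
Require Import Defs.
From HB Require Import structures.
From mathcomp Require Import all_boot all_order all_algebra all_fingroup.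
From mathcomp Require Import all_classical all_reals all_analysis.
Import Order.TTheory GRing.Theory Num.Theory numFieldNormedType.Exports.
From mathcomp Require Import zify ring lra.
Set Implicit Arguments. Unset Strict Implicit. Unset Printing Implicit Defensive.

Section Words.
Variable n : nat.
Implicit Types phi : 'S_n.

Lemma perm_wordE phi : perm_word phi = map val (map phi (enum 'I_n)).
Proof. by rewrite -map_comp; apply: eq_map. Qed.

Lemma mem_perm_word phi x : (x \in perm_word phi) = (x < n)%N.
Proof.
apply/mapP/idP => [[i _ ->]|hx]; first exact: ltn_ord.
exists (phi^-1 (Ordinal hx))%g; first by rewrite mem_enum.
by rewrite permKV.
Qed.

Lemma uniq_perm_word phi : uniq (perm_word phi).
Proof.
rewrite perm_wordE map_inj_uniq; last exact: val_inj.
rewrite map_inj_uniq ?enum_uniq //; exact: perm_inj.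
Qed.

Lemma index_perm_word phi (x : 'I_n) :
  index (val x) (perm_word phi) = val ((phi^-1)%g x).
Proof.
rewrite perm_wordE index_map; last exact: val_inj.
by rewrite -{1}(permKV phi x) index_map ?index_enum_ord //; exact: perm_inj.
Qed.

Definition rw phi : rel nat :=
  fun x y => (index x (perm_word phi) < index y (perm_word phi))%N.

Lemma sorted_enum_ord m : sorted (fun a b : 'I_m => (val a < val b)%N) (enum 'I_m).
Proof. by have := iota_ltn_sorted 0 m; rewrite -val_enum_ord sorted_map. Qed.

Lemma rw_trans phi : transitive (rw phi).
Proof. move=> y x z; exact: ltn_trans. Qed.

Lemma sorted_word phi : sorted (rw phi) (perm_word phi).
Proof.
rewrite /perm_word sorted_map; apply: sub_sorted (sorted_enum_ord n).
by move=> a b /= hab; rewrite /rw /= !index_perm_word !permK.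
Qed.

End Words.

Section Pattern.
Variables (k n : nat) (hkn : (k <= n)%N).

Definition Pat (sigma : 'S_k) (phi : 'S_n) :=
  forall x y, (x < k)%N -> (y < k)%N -> rw phi x y = rw sigma x y.

Lemma Pat_contains (sigma : 'S_k) (phi : 'S_n) : Pat sigma phi -> contains_pat sigma phi.
Proof.
move=> hP; apply/eqP; apply: (irr_sorted_eq (@rw_trans _ phi)).
- by move=> x; exact: ltnn.
- apply: sorted_filter; first exact: rw_trans. exact: sorted_word.
- apply: (sub_in_sorted (P := fun x => (x < k)%N)) (sorted_word sigma).
    by move=> x y hx hy; rewrite hP.
  by apply/allP => x; rewrite mem_perm_word.
- move=> x; rewrite mem_filter !mem_perm_word.
  by case: (ltnP x k) => // hx; apply: leq_trans hkn.
Qed.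

Lemma contains_Pat (sigma : 'S_k) (phi : 'S_n) : contains_pat sigma phi -> Pat sigma phi.
Proof.
move/eqP=> E x y hx hy.
have hs : sorted (rw phi) (perm_word sigma).
  by rewrite -E; apply: sorted_filter; [exact: rw_trans | exact: sorted_word].
have xt : x \in perm_word sigma by rewrite mem_perm_word.
have yt : y \in perm_word sigma by rewrite mem_perm_word.
rewrite {2}/rw.
have H := sorted_ltn_nth (@rw_trans _ phi) 0 hs.
have ix : index x (perm_word sigma) \in [pred m | (m < size (perm_word sigma))%N].
  by rewrite inE index_mem.
have iy : index y (perm_word sigma) \in [pred m | (m < size (perm_word sigma))%N].
  by rewrite inE index_mem.
case: ltngtP => h.
- by have := H _ _ ix iy h; rewrite !nth_index.
- have := H _ _ iy ix h; rewrite !nth_index // /rw => h2.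
  by apply/negbTE; rewrite -leqNgt ltnW.
- have exy : x = y by rewrite -(nth_index 0 xt) h nth_index.
  by rewrite exy /rw ltnn.
Qed.

Lemma contains_uniq (sigma sigma' : 'S_k) (phi : 'S_n) :
  contains_pat sigma phi -> contains_pat sigma' phi -> sigma = sigma'.
Proof.
move=> /eqP h1 /eqP h2.
have E : perm_word sigma = perm_word sigma' by rewrite -h1 -h2.
apply: (@invg_inj _ sigma sigma'); apply/permP => i; apply: val_inj.
by rewrite -!index_perm_word E.
Qed.

Lemma contains_exists (phi : 'S_n) : exists sigma : 'S_k, contains_pat sigma phi.
Proof.
pose s := [seq x <- perm_word phi | (x < k)%N].
have us : uniq s by rewrite filter_uniq // uniq_perm_word.
have ps : perm_eq s (iota 0 k).
  apply: uniq_perm => //; first exact: iota_uniq.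
  move=> x; rewrite mem_filter mem_perm_word mem_iota add0n /=.
  by case: (ltnP x k) => // hx; apply: leq_trans hkn.
have sz : size s = k by rewrite (perm_size ps) size_iota.
pose f (i : 'I_k) : 'I_k := insubd i (nth 0 s i).
have fv i : val (f i) = nth 0 s i.
  rewrite val_insubd.
  have : nth 0 s i \in s by rewrite mem_nth // sz.
  by rewrite (perm_mem ps) mem_iota add0n => /andP [_ ->].
have finj : injective f.
  move=> i j /(congr1 val); rewrite !fv => /eqP.
  by rewrite nth_uniq ?sz // => /eqP /val_inj.
exists (perm finj); apply/eqP.
rewrite /perm_word.
have -> : [seq val (perm finj i) | i <- enum 'I_k] = [seq nth 0 s (val i) | i <- enum 'I_k].
  by apply: eq_map => i /=; rewrite permE fv.
rewrite (map_comp (nth 0 s) val) val_enum_ord.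
by have := mkseq_nth 0 s; rewrite sz /mkseq => ->.
Qed.

End Pattern.

Lemma inv_invg n (phi : 'S_n) : is_involution phi -> (phi^-1)%g = phi.
Proof.
move/eqP=> h.
by rewrite -[RHS]mul1g -(mulVg phi) -mulgA h mulg1.
Qed.

Lemma index_pw m (phi : 'S_m) x (h : (x < m)%N) :
  index x (perm_word phi) = val ((phi^-1)%g (Ordinal h)).
Proof. by rewrite -index_perm_word. Qed.

Section Sym.
Variables (k n : nat) (hkn : (k <= n)%N).

Definition pn (pi : 'S_k) (x : nat) : nat :=
  match (insub x : option 'I_k) with Some y => val (pi y) | None => x end.

Lemma pn_val pi (y : 'I_k) : pn pi (val y) = val (pi y).
Proof. by rewrite /pn valK. Qed.

Lemma pn_ge pi x : (k <= x)%N -> pn pi x = x.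
Proof. by move=> h; rewrite /pn insubN // -leqNgt. Qed.

Lemma pn_lt pi x (h : (x < k)%N) : pn pi x = val (pi (Ordinal h)).
Proof. by rewrite -pn_val. Qed.

Lemma pn_inj pi : injective (pn pi).
Proof.
move=> x y; case: (ltnP x k) => hx; case: (ltnP y k) => hy.
- by rewrite (pn_lt _ hx) (pn_lt _ hy) => /val_inj /perm_inj /(congr1 val).
- by rewrite (pn_lt _ hx) (pn_ge _ hy) => e; move: (ltn_ord (pi (Ordinal hx))); rewrite e ltnNge hy.
- by rewrite (pn_lt _ hy) (pn_ge _ hx) => e; move: (ltn_ord (pi (Ordinal hy))); rewrite -e ltnNge hx.
- by rewrite !pn_ge.
Qed.

Lemma pn_ltn pi (x : 'I_n) : (pn pi x < n)%N.
Proof.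
case: (ltnP x k) => hx; last by rewrite pn_ge.
by rewrite (pn_lt _ hx); exact: leq_trans (ltn_ord _) hkn.
Qed.

Definition liftf pi (x : 'I_n) : 'I_n := insubd x (pn pi x).

Lemma liftf_val pi x : val (liftf pi x) = pn pi x.
Proof. by rewrite val_insubd pn_ltn. Qed.

Lemma liftf_inj pi : injective (liftf pi).
Proof. by move=> x y /(congr1 val); rewrite !liftf_val => /pn_inj /val_inj. Qed.

Definition tau pi : 'S_n := perm (@liftf_inj pi).

Lemma tau_val pi x : val (tau pi x) = pn pi x.
Proof. by rewrite permE liftf_val. Qed.

Lemma tauV_fix pi (w : 'I_n) : (k <= w)%N -> ((tau pi)^-1)%g w = w.
Proof.
move=> h; have e : tau pi w = w by apply: val_inj; rewrite tau_val pn_ge.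
by rewrite -{1}e permK.
Qed.

Definition good (phi : 'S_n) := [forall i : 'I_n, (i < k)%N ==> (k <= phi i)%N].

Lemma conjE pi (phi : 'S_n) x :
  (phi ^ (tau pi)^-1)%g x = ((tau pi)^-1)%g (phi (tau pi x)).
Proof. by rewrite conjgE invgK !permM. Qed.

Lemma conj_inv pi phi : is_involution phi -> is_involution (phi ^ (tau pi)^-1)%g.
Proof. by move/eqP=> h; apply/eqP; rewrite -conjMg h conj1g. Qed.

Lemma conj_good pi phi : good phi -> good (phi ^ (tau pi)^-1)%g.
Proof.
move=> /forallP g; apply/forallP => i; apply/implyP => hi.
have h1 : (k <= phi (tau pi i))%N.
  apply: (implyP (g _)); rewrite tau_val pn_lt; exact: ltn_ord.
by rewrite conjE tauV_fix.
Qed.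

Lemma conj_Pat pi (sigma : 'S_k) phi : is_involution phi -> good phi ->
  Pat sigma phi -> Pat (sigma * pi^-1)%g (phi ^ (tau pi)^-1)%g.
Proof.
move=> hi /forallP g hP x y hx hy.
have hxn : (x < n)%N := leq_trans hx hkn.
have hyn : (y < n)%N := leq_trans hy hkn.
have key z (hz : (z < k)%N) (hzn : (z < n)%N) :
  index z (perm_word (phi ^ (tau pi)^-1)%g) = index (pn pi z) (perm_word phi).
  rewrite (index_pw _ hzn) inv_invg; last exact: conj_inv.
  rewrite conjE tauV_fix; last first.
    apply: (implyP (g _)); rewrite tau_val /= (pn_lt _ hz); exact: ltn_ord.
  have -> : pn pi z = val (tau pi (Ordinal hzn)) by rewrite tau_val.
  by rewrite index_perm_word inv_invg.
rewrite /rw !key //.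
have := hP (pn pi x) (pn pi y); rewrite /rw => ->; last 2 first.
- by rewrite (pn_lt _ hx) ltn_ord.
- by rewrite (pn_lt _ hy) ltn_ord.
rewrite (pn_lt _ hx) (pn_lt _ hy) !index_perm_word (index_pw _ hx) (index_pw _ hy).
by rewrite invMg invgK !permM.
Qed.

Definition cls (sigma : 'S_k) :=
  [set phi : 'S_n | is_involution phi && good phi && contains_pat sigma phi].

Lemma cls_le sigma pi : (#|cls sigma| <= #|cls (sigma * pi^-1)%g|)%N.
Proof.
rewrite -(card_imset _ (conjg_inj ((tau pi)^-1)%g)).
have S : [set (x0 ^ (tau pi)^-1)%g | x0 in cls sigma] \subset cls (sigma * pi^-1)%g.
  apply/fintype.subsetP => _ /imsetP [phi hphi ->].
  move: hphi; rewrite !inE => /andP [/andP [hi hg] hc].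
  rewrite conj_inv // conj_good //=.
  apply: Pat_contains => //; apply: conj_Pat => //; exact: contains_Pat.
exact: subset_leq_card S.
Qed.

Lemma cls_eq sigma sigma' : #|cls sigma| = #|cls sigma'|.
Proof.
apply/eqP; rewrite eqn_leq.
have e (s s' : 'S_k) : (s * (s'^-1 * s)^-1)%g = s'.
  by rewrite invMg invgK mulgA mulgV mul1g.
apply/andP; split.
- by have := cls_le sigma (sigma'^-1 * sigma)%g; rewrite e.
- by have := cls_le sigma' (sigma^-1 * sigma')%g; rewrite e.
Qed.

Definition GoodSet := [set phi : 'S_n | is_involution phi && good phi].

Lemma card_GoodSet sigma : #|GoodSet| = (k`! * #|cls sigma|)%N.
Proof.
rewrite -sum1_card.
have -> : (\sum_(phi in GoodSet) 1 = \sum_(phi in GoodSet) \sum_(s : 'S_k) (contains_pat s phi : nat))%N.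
  apply: eq_bigr => phi _.
  have [s0 h0] := contains_exists hkn phi.
  rewrite (bigD1 s0) //= h0 big1 // => s hs.
  by case hc: (contains_pat s phi) => //; rewrite (contains_uniq hc h0) eqxx in hs.
rewrite exchange_big /=.
have -> : (\sum_(s : 'S_k) \sum_(phi in GoodSet) (contains_pat s phi : nat) = \sum_(s : 'S_k) #|cls sigma|)%N.
  apply: eq_bigr => s _; rewrite (cls_eq sigma s) -sum1_card big_mkcond [RHS]big_mkcond /=.
  apply: eq_bigr => phi _; rewrite !inE.
  by case: (_ && _); case: (contains_pat s phi).
by rewrite sum_nat_const card_Sn.
Qed.

End Sym.

Lemma cardP_sum (T : finType) (P : pred T) : #|[set x | P x]| = (\sum_x (P x : nat))%N.
Proof.
rewrite -sum1_card big_mkcond; apply: eq_bigr => x _; rewrite inE; by case: (P x).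
Qed.

Lemma CS_aux (T : Type) (r : seq T) (F : T -> nat) a :
  (2 * a * \sum_(i <- r) F i <= size r * a ^ 2 + \sum_(i <- r) F i ^ 2)%N.
Proof.
elim: r => [|x r IH]; first by rewrite !big_nil; lia.
rewrite !big_cons /=.
have := leq_of_leqif (nat_Cauchy a (F x)).
nia.
Qed.

Lemma CS_seq (T : Type) (r : seq T) (F : T -> nat) :
  ((\sum_(i <- r) F i) ^ 2 <= size r * \sum_(i <- r) F i ^ 2)%N.
Proof.
elim: r => [|x r IH]; first by rewrite !big_nil.
rewrite !big_cons /=.
have := CS_aux r F (F x).
move: IH; set S := (\sum_(i <- r) F i)%N; set Q := (\sum_(i <- r) F i ^ 2)%N.
set m := size r; set f := F x.
nia.
Qed.

Lemma CS_set (T : finType) (A : {pred T}) (F : T -> nat) :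
  ((\sum_(i in A) F i) ^ 2 <= #|A| * \sum_(i in A) F i ^ 2)%N.
Proof. by rewrite -!big_enum cardE; exact: CS_seq. Qed.

Section Count.
Variable n : nat.
Implicit Types phi : 'S_n.

Lemma invol_pp phi : is_involution phi -> forall y, phi (phi y) = y.
Proof. by move=> h y; rewrite -{1}(inv_invg h) permK. Qed.

Lemma comm_tperm phi a b : is_involution phi ->
  (phi a == b) || ((phi a == a) && (phi b == b)) ->
  (phi * tperm a b = tperm a b * phi)%g.
Proof.
move=> h hc; have pp := invol_pp h.
apply/permP => x; rewrite !permM.
case/orP: hc => [/eqP ha | /andP [/eqP ha /eqP hb]].
- have hb : phi b = a by rewrite -ha pp.
  case: (tpermP a b x) => [->|->|xa xb]; rewrite ?ha ?hb ?tpermL ?tpermR //.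
  rewrite tpermD //; apply/eqP => e.
  + by apply: xb; rewrite -(pp x) -e ha.
  + by apply: xa; rewrite -(pp x) -e hb.
- case: (tpermP a b x) => [->|->|xa xb]; rewrite ?ha ?hb ?tpermL ?tpermR //.
  rewrite tpermD //; apply/eqP => e.
  + by apply: xa; rewrite -(pp x) -e ha.
  + by apply: xb; rewrite -(pp x) -e hb.
Qed.

Lemma inv_mul_tperm phi a b : is_involution phi ->
  (phi a == b) || ((phi a == a) && (phi b == b)) ->
  is_involution (phi * tperm a b)%g.
Proof.
move=> h hc; rewrite /is_involution.
by rewrite {2}(comm_tperm h hc) mulgA -(mulgA phi) tperm2 mulg1.
Qed.

Definition Acnt (i j : 'I_n) := #|[set phi : 'S_n | is_involution phi && (phi i == j)]|.

Lemma Acnt_off i j : (Acnt i j <= Acnt i i)%N.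
Proof.
rewrite /Acnt -(card_imset _ (mulIg (tperm i j))).
have S : [set (x * tperm i j)%g | x in [set phi : 'S_n | is_involution phi && (phi i == j)]]
   \subset [set phi : 'S_n | is_involution phi && (phi i == i)].
  apply/fintype.subsetP => _ /imsetP [phi hphi ->].
  move: hphi; rewrite !inE => /andP [hi /eqP hij].
  rewrite inv_mul_tperm //=; last by rewrite hij eqxx.
  by rewrite permM hij tpermR.
exact: subset_leq_card S.
Qed.

Lemma Acnt_sym i j : (Acnt i i <= Acnt j j)%N.
Proof.
rewrite /Acnt -(card_imset _ (conjg_inj (tperm i j))).
have S : [set (x ^ tperm i j)%g | x in [set phi : 'S_n | is_involution phi && (phi i == i)]]
   \subset [set phi : 'S_n | is_involution phi && (phi j == j)].
  apply/fintype.subsetP => _ /imsetP [phi hphi ->].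
  move: hphi; rewrite !inE => /andP [/eqP hi /eqP hij].
  apply/andP; split.
    by apply/eqP; rewrite -conjMg hi conj1g.
  by rewrite conjgE tpermV !permM tpermR hij tpermL.
exact: subset_leq_card S.
Qed.

Definition Inv := [set phi : 'S_n | is_involution phi].
Definition fixn phi := (\sum_(x : 'I_n) ((phi x == x) : nat))%N.
Definition Fsum := (\sum_(j : 'I_n) Acnt j j)%N.

Lemma Fsum_E : Fsum = (\sum_(phi in Inv) fixn phi)%N.
Proof.
rewrite /Fsum.
transitivity (\sum_(j : 'I_n) \sum_(phi : 'S_n) ((is_involution phi && (phi j == j)) : nat))%N.
  by apply: eq_bigr => j _; rewrite /Acnt cardP_sum.
rewrite exchange_big /= [RHS]big_mkcond /=; apply: eq_bigr => phi _.
rewrite inE /fixn; case: (is_involution phi) => /=; last by rewrite big1.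
by [].
Qed.

Lemma nA_le i : (n * Acnt i i <= Fsum)%N.
Proof.
rewrite /Fsum -[X in (X * _)%N]card_ord -sum_nat_const.
by apply: leq_sum => j _; exact: Acnt_sym.
Qed.

Lemma Q_le : (\sum_(phi in Inv) fixn phi ^ 2 <= n * #|Inv|)%N.
Proof.
pose Ta (a : 'I_n) := [set p : 'S_n * 'I_n | is_involution p.1 && (p.1 a == a) && (p.1 p.2 == p.2)].
have HT a : (#|Ta a| <= #|Inv|)%N.
  have inj : {in Ta a &, injective (fun p : 'S_n * 'I_n => (p.1 * tperm a p.2)%g)}.
    move=> [phi b] [psi c]; rewrite !inE /= => /andP [/andP [_ /eqP h1] _] /andP [/andP [_ /eqP h2] _] e.
    have ebc : b = c.
      by have := congr1 (fun f : 'S_n => f a) e; rewrite /= !permM h1 h2 !tpermL.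
    by subst c; move/mulIg: e => ->.
  rewrite -(card_in_imset inj).
  have S : [set (p.1 * tperm a p.2)%g | p in Ta a] \subset Inv.
    apply/fintype.subsetP => _ /imsetP [[phi b] hp ->].
    move: hp; rewrite !inE /= => /andP [/andP [hi h1] h2].
    by apply: inv_mul_tperm => //; rewrite h1 h2 orbT.
  exact: subset_leq_card S.
have E : (\sum_(phi in Inv) fixn phi ^ 2 = \sum_(a : 'I_n) #|Ta a|)%N.
  under [RHS]eq_bigr => a _ do rewrite cardP_sum -(pair_bigA _ (fun phi b => (is_involution phi && (phi a == a) && (phi b == b) : nat))).
  rewrite exchange_big /= big_mkcond /=; apply: eq_bigr => phi _.
  rewrite inE /fixn expnS expn1 big_distrl /=.
  case: (is_involution phi) => /=; last by rewrite big1 // => a _; rewrite big1.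
  apply: eq_bigr => a _; rewrite big_distrr /=; apply: eq_bigr => b _.
  by rewrite mulnb.
rewrite E -[X in (X * _)%N]card_ord -sum_nat_const.
by apply: leq_sum => a _; exact: HT.
Qed.

End Count.

Section Final.
Variables (k n : nat) (hkn : (k <= n)%N).

Definition Bad := [set phi : 'S_n | is_involution phi && ~~ good k phi].

Lemma Inv_split : #|Inv n| = (#|GoodSet k n| + #|Bad|)%N.
Proof.
rewrite /Inv /GoodSet /Bad !cardP_sum -big_split /=; apply: eq_bigr => phi _.
by case: (is_involution phi); case: (good k phi).
Qed.

Lemma sum_lt_k c : (\sum_(i < n | (i < k)%N) c = k * c)%N.
Proof. by rewrite -(big_ord_widen n (fun _ => c) hkn) sum_nat_const card_ord. Qed.

Lemma Bad_le : (n * #|Bad| <= k * k * Fsum n)%N.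
Proof.
have H1 : (#|Bad| <= \sum_(i < n | (i < k)%N) \sum_(j < n | (j < k)%N) Acnt i j)%N.
  apply: (@leq_trans (\sum_(i < n | (i < k)%N) \sum_(j < n | (j < k)%N) \sum_(phi : 'S_n)
                 ((is_involution phi && (phi i == j)) : nat))%N); last first.
    by apply: eq_leq; apply: eq_bigr => i _; apply: eq_bigr => j _; rewrite /Acnt cardP_sum.
  rewrite (exchange_big_dep xpredT) //=.
  under eq_bigr => i _ do rewrite (exchange_big_dep xpredT) //=.
  rewrite (exchange_big_dep xpredT) //= /Bad cardP_sum.
  apply: leq_sum => phi _.
  case hb: (is_involution phi && ~~ good k phi) => //=.
  move: hb => /andP [hi /forallPn [i]]; rewrite negb_imply -ltnNge => /andP [hik hpk].
  rewrite (bigD1 i) /=; last by rewrite ?hik ?hpk.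
  rewrite (bigD1 (phi i)) /=; last by rewrite ?hik ?hpk.
  by rewrite hi (invol_pp hi) eqxx /= -addnA add1n.
have H2 : (n * (\sum_(i < n | (i < k)%N) \sum_(j < n | (j < k)%N) Acnt i j)
           <= \sum_(i < n | (i < k)%N) \sum_(j < n | (j < k)%N) Fsum n)%N.
  rewrite big_distrr /=; apply: leq_sum => i _.
  rewrite big_distrr /=; apply: leq_sum => j _.
  apply: leq_trans (nA_le i); rewrite leq_mul2l; apply/orP; right; exact: Acnt_off.
move: H2; rewrite [X in (_ <= X)%N](eq_bigr (fun _ => k * Fsum n)%N); last by move=> i _; rewrite sum_lt_k.
rewrite sum_lt_k mulnA => H2.
apply: leq_trans H2; rewrite leq_mul2l H1 orbT //.
Qed.

Lemma main_nat : (n * #|Bad| ^ 2 <= k ^ 4 * #|Inv n| ^ 2)%N.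
Proof.
have hB := Bad_le.
have hF : (Fsum n ^ 2 <= #|Inv n| * (n * #|Inv n|))%N.
  rewrite Fsum_E; apply: leq_trans (CS_set _ _) _.
  by rewrite leq_mul2l Q_le orbT.
case: (posnP n) => [n0|npos]; first by rewrite [X in (X * _)%N]n0 mul0n.
have : ((n * #|Bad|) ^ 2 <= (k * k * Fsum n) ^ 2)%N by rewrite leq_exp2r.
move: hF; set N := #|Inv n|; set B := #|Bad|; set F := Fsum n => hF h.
have h3 : ((k * k * F) ^ 2 <= k ^ 4 * (N * (n * N)))%N.
  have -> : ((k * k * F) ^ 2 = k ^ 4 * F ^ 2)%N by rewrite !expnMn -expnD.
  by rewrite leq_mul2l hF orbT.
have h4 := leq_trans h h3.
have : (n * (n * B ^ 2) <= n * (k ^ 4 * N ^ 2))%N.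
  move: h4; rewrite expnMn; nia.
by rewrite leq_pmul2l.
Qed.

End Final.

Lemma C_bounds k n (sigma : 'S_k) :
  (#|cls n sigma| <= #|[set phi : 'S_n | is_involution phi && contains_pat sigma phi]|
   <= #|cls n sigma| + #|Bad k n|)%N.
Proof.
rewrite /cls /Bad !cardP_sum -big_split /=; apply/andP; split; apply: leq_sum => phi _;
by case: (is_involution phi); case: (good k phi); case: (contains_pat sigma phi).
Qed.

Lemma Inv_pos n : (0 < #|[set phi : 'S_n | is_involution phi]|)%N.
Proof. by apply/card_gt0P; exists 1%g; rewrite inE /is_involution mulg1. Qed.

Local Open Scope ring_scope.

Lemma real_bound (R : realFieldType) (r N c C B : R) :
  1 <= r -> 0 < N -> N = r * c + B -> 0 <= B -> c <= C -> C <= c + B ->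
  `|r^-1 - C / N| <= B / N.
Proof.
move=> r1 N0 eN B0 cC Cc.
have r0 : 0 < r by apply: lt_le_trans r1.
have E : r^-1 - C / N = (B / r - (C - c)) / N.
  rewrite eN; field.
  by apply/andP; split; [rewrite -eN gt_eqF | rewrite gt_eqF].
rewrite E normrM [`|N^-1|]gtr0_norm ?invr_gt0 // ler_wpM2r //.
  by rewrite invr_ge0 ltW.
have hb : 0 <= B / r by rewrite divr_ge0 // ltW.
have hb2 : B / r <= B by rewrite ler_pdivrMr // ler_peMr.
by rewrite ler_norml; apply/andP; split; lra.
Qed.


Unset Implicit Arguments.
Local Open Scope classical_set_scope.
Local Open Scope ring_scope.

Theorem lemma1 (R : realType) (k : nat) (sigma : 'S_k) :
  inv_contain_prob R sigma @ \oo --> (((k`!)%:R)^-1 : R).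
Proof.
apply/cvgrPdist_le => eps eps0.
pose K4 : R := (k ^ 4)%:R.
have hK : 0 <= K4 / eps ^+ 2 by rewrite divr_ge0 // ?exprn_ge0 // ltW.
pose M := maxn (maxn k 1) (Num.Def.archi_bound (K4 / eps ^+ 2)).
exists M => // n /= hn.
have hkn : (k <= n)%N by move: hn; rewrite /M !geq_max => /andP [/andP [] ] .
have npos : (0 < n)%N by move: hn; rewrite /M !geq_max => /andP [/andP [] ] .
have hM : K4 / eps ^+ 2 < n%:R.
  apply: lt_le_trans (archi_boundP hK) _; rewrite ler_nat.
  by move: hn; rewrite /M !geq_max => /andP [_ ].
rewrite /inv_contain_prob.
set N := #|[set phi : 'S_n | is_involution phi]%SET|.
set C := #|[set phi : 'S_n | is_involution phi && contains_pat sigma phi]%SET|.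
have eN : N = (k`! * #|cls n sigma| + #|Bad k n|)%N.
  by rewrite -(card_GoodSet hkn sigma) -Inv_split.
have /andP [cC Cc] := C_bounds n sigma.
have N0 : (0 < N)%N := Inv_pos n.
apply: le_trans (real_bound (c := #|cls n sigma|%:R) _ _ _ _ _ _) _.
- by rewrite ler1n fact_gt0.
- by rewrite ltr0n.
- by rewrite eN natrD natrM.
- by [].
- by rewrite ler_nat.
- by rewrite -natrD ler_nat.
have hmain := main_nat hkn.
rewrite -/N in hmain.
set B := #|Bad k n| in hmain *.
have h1 : n%:R * (B%:R / N%:R) ^+ 2 <= K4 :> R.
  rewrite expr_div_n mulrA ler_pdivrMr ?exprn_gt0 ?ltr0n //.
  by rewrite -!natrX -!natrM ler_nat.
have h2 : K4 < eps ^+ 2 * n%:R by rewrite mulrC -ltr_pdivrMr ?exprn_gt0.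
have h0 : 0 <= B%:R / N%:R :> R by rewrite divr_ge0.
have hn0 : 0 < n%:R :> R by rewrite ltr0n.
set e := B%:R / N%:R in h1 h0 *.
have h3 : e ^+ 2 < eps ^+ 2.
  rewrite -(ltr_pM2l hn0); apply: le_lt_trans h1 _; by rewrite mulrC.
nra.
Qed.
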